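(* There is a constant $C>0$ such that $|L_{nl}|\le C\sqrt{n+1}$ for all integers $0\le l\le n$.
   Context: With $\Lambda(z)=\frac{\Gamma(z+1/2)}{\Gamma(z+1)}$, the coefficients $L_{nl}$ ($0\le l\le n$) are defined by: $L_{nl}=1$ if $n=l=0$; $L_{nl}=\frac{\sqrt\pi}{2\Lambda(n)}$ if $n=l>0$; $L_{nl}=\frac{-n(l+1/2)}{(n+l+1)(n-l)}\Lambda\!\left(\frac{n-l-2}{2}\right)\Lambda\!\left(\frac{n+l-1}{2}\right)$ if $n>l$ and $n+l$ is even; $L_{nl}=0$ otherwise. *)

(* Defs.v *)
From Stdlib Require Import Reals Arith.
From Coquelicot Require Import Coquelicot.
Open Scope R_scope.

Definition Gamma (x : R) : R :=
  RInt_gen (fun t => Rpower t (x - 1) * exp (- t))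
           (at_right 0) (Rbar_locally p_infty).

Definition Lambda (z : R) : R := Gamma (z + / 2) / Gamma (z + 1).

Definition Lcoef (n l : nat) : R :=
  if (Nat.eqb n 0 && Nat.eqb l 0)%bool then 1
  else if Nat.eqb n l then sqrt PI / (2 * Lambda (INR n))
  else if (Nat.ltb l n && Nat.even (n + l))%bool then
    (- INR n * (INR l + / 2)) / ((INR n + INR l + 1) * (INR n - INR l))
    * Lambda ((INR n - INR l - 2) / 2) * Lambda ((INR n + INR l - 1) / 2)
  else 0.

(* Main.v *)
Require Import Defs.
From Stdlib Require Import Reals Lra Lia Factorial.
From Coquelicot Require Import Coquelicot.
Open Scope R_scope.

Definition fx (x t : R) : R := Rpower t (x - 1) * exp (- t).

Lemma Rpower_pos' t y : 0 < Rpower t y.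
Proof. unfold Rpower; apply exp_pos. Qed.

Lemma exd_pw (y t : R) : 0 < t -> is_derive (fun t => Rpower t y) t (y * Rpower t (y - 1)).
Proof. intros Ht; apply is_derive_Reals, derivable_pt_lim_power; exact Ht. Qed.

Lemma exd_fx (y t : R) : 0 < t -> ex_derive (fun t => Rpower t y * exp (- t)) t.
Proof.
  intros Ht. apply (ex_derive_mult (fun t => Rpower t y) (fun t => exp (-t))).
  - eexists; apply exd_pw; exact Ht.
  - auto_derive; auto.
Qed.

Lemma cont_fx (y t : R) : 0 < t -> continuous (fun t => Rpower t y * exp (- t)) t.
Proof. intros; apply (@ex_derive_continuous R_AbsRing R_NormedModule), exd_fx; auto. Qed.

Lemma cont_pw (y t : R) : 0 < t -> continuous (fun t => Rpower t y) t.
Proof. intros; apply (@ex_derive_continuous R_AbsRing R_NormedModule); eexists; apply exd_pw; auto. Qed.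

Lemma prod_pos (P : R -> Prop) : (forall t, 0 < t -> P t) ->
  filter_prod (at_right 0) (Rbar_locally p_infty)
   (fun ab => forall x, Rmin (fst ab) (snd ab) <= x <= Rmax (fst ab) (snd ab) -> P x).
Proof.
  intros HP. apply Filter_prod with (fun a => 0 < a) (fun b => 0 < b).
  - exists (mkposreal 1 Rlt_0_1). intros y _ Hy; exact Hy.
  - exists 0. intros; auto.
  - intros a b Ha Hb x Hx. apply HP. simpl in Hx.
    assert (0 < Rmin a b) by (apply Rmin_case; auto). lra.
Qed.

Lemma loc_pos (t : R) : 0 < t -> locally t (fun y => 0 < y).
Proof.
  intros Ht. exists (mkposreal t Ht). intros y Hy.
  change (Rabs (y - t) < t) in Hy. apply Rabs_def2 in Hy. lra.
Qed.

Lemma lim0 (x : R) : 0 < x ->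
  filterlim (fun t => - (Rpower t x * exp (- t))) (at_right 0) (locally 0).
Proof.
  intros Hx. apply filterlim_locally. intros eps.
  assert (He : 0 < eps / 2) by (destruct eps; simpl; lra).
  set (d := Rpower (eps / 2) (/ x)).
  assert (Hd : 0 < d) by apply Rpower_pos'.
  exists (mkposreal d Hd). intros y Hy Hy0.
  change (Rabs (y - 0) < d) in Hy. rewrite Rminus_0_r, Rabs_right in Hy by lra.
  change (Rabs (- (Rpower y x * exp (- y)) - 0) < eps).
  assert (H1 : Rpower y x <= Rpower d x) by (apply Rle_Rpower_l; lra).
  assert (H2 : Rpower d x = eps / 2).
  { unfold d; rewrite Rpower_mult. replace (/ x * x) with 1 by (field; lra).
    apply Rpower_1; auto. }
  assert (H3 : exp (- y) < 1). { rewrite <- exp_0. apply exp_increasing. lra. }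
  assert (H4 := Rpower_pos' y x). assert (H5 := exp_pos (- y)).
  rewrite Rminus_0_r, Rabs_Ropp, Rabs_right by nra.
  destruct eps; simpl in *; nra.
Qed.

Lemma liminf (x : R) :
  filterlim (fun t => - (Rpower t x * exp (- t))) (Rbar_locally p_infty) (locally 0).
Proof.
  assert (H1 : is_lim (fun t => x * (ln t / t) - 1) p_infty (-1)).
  { replace (-1) with (x * 0 - 1) by ring.
    eapply is_lim_minus. apply is_lim_scal_l. apply is_lim_div_ln_p. apply is_lim_const.
    simpl. reflexivity. }
  assert (Hex : ex_Rbar_mult p_infty (-1)) by (simpl; lra).
  assert (H2 := is_lim_mult _ _ _ _ _ (is_lim_id p_infty) H1 Hex).
  assert (E : Rbar_mult p_infty (-1) = m_infty).
  { simpl. destruct (Rle_dec 0 (-1)) as [Hc|Hc]; [exfalso; lra | reflexivity]. }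
  rewrite E in H2.
  assert (H3 := is_lim_comp _ _ _ _ _ is_lim_exp_m H2).
  assert (H4 : is_lim (fun t => exp (t * (x * (ln t / t) - 1))) p_infty 0).
  { apply H3. exists 0. intros; discriminate. }
  apply is_lim_opp in H4. simpl in H4. rewrite Ropp_0 in H4.
  eapply filterlim_ext_loc; [| exact H4].
  exists 0. intros t Ht. unfold Rpower. rewrite <- exp_plus. f_equal. f_equal. field. lra.
Qed.

Notation FA := (at_right 0).
Notation FB := (Rbar_locally p_infty).

Lemma derB (x t : R) : 0 < t ->
  is_derive (fun t => - (Rpower t x * exp (- t))) t
    (Rpower t x * exp (- t) - x * (Rpower t (x - 1) * exp (- t))).
Proof.
  intros Ht.
  assert (H2 : is_derive (fun t => exp (- t)) t (- exp (- t))).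
  { auto_derive; auto. ring. }
  assert (H := is_derive_opp _ _ _ (is_derive_mult _ _ _ _ _ (exd_pw x t Ht) H2 Rmult_comm)).
  replace (Rpower t x * exp (- t) - x * (Rpower t (x - 1) * exp (- t))) with
    (opp (plus (mult (x * Rpower t (x - 1)) (exp (- t))) (mult (Rpower t x) (- exp (- t)))))
    by (unfold opp, plus, mult; simpl; ring).
  exact H.
Qed.

Lemma Grec (x l : R) : 0 < x ->
  is_RInt_gen (fun t => Rpower t (x - 1) * exp (- t)) FA FB l ->
  is_RInt_gen (fun t => Rpower t (x + 1 - 1) * exp (- t)) FA FB (x * l).
Proof.
  intros Hx Hl.
  set (B := fun t => - (Rpower t x * exp (- t))).
  set (D := fun t => Rpower t x * exp (- t) - x * (Rpower t (x - 1) * exp (- t))).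
  assert (HDB : forall t, 0 < t -> Derive B t = D t).
  { intros t Ht. apply is_derive_unique. apply derB; auto. }
  assert (HD : is_RInt_gen (Derive B) FA FB (0 - 0)).
  { apply is_RInt_gen_Derive.
    - apply prod_pos. intros t Ht. eexists; apply derB; auto.
    - apply prod_pos. intros t Ht.
      apply (continuous_ext_loc _ D).
      + eapply filter_imp; [| apply loc_pos; exact Ht]. intros y Hy. symmetry; apply HDB; auto.
      + apply (@ex_derive_continuous R_AbsRing R_NormedModule).
        unfold D. apply (ex_derive_minus (fun t => Rpower t x * exp (- t))
                          (fun t => x * (Rpower t (x - 1) * exp (- t)))).
        * apply exd_fx; auto.
        * apply (ex_derive_mult (fun _ => x) (fun t => Rpower t (x - 1) * exp (- t))).
          apply ex_derive_const. apply exd_fx; auto.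
    - apply lim0; auto.
    - apply liminf. }
  assert (HS := is_RInt_gen_scal _ x l Hl).
  assert (HP := is_RInt_gen_plus _ _ _ _ HS HD).
  replace (x * l) with (plus (scal x l) (0 - 0)) by (unfold plus, scal; simpl; unfold mult; simpl; ring).
  eapply is_RInt_gen_ext; [| exact HP].
  eapply filter_imp; [| apply (prod_pos (fun t => 0 < t)); auto].
  intros [a b] H t Ht. simpl in *. 
  assert (0 < t) by (apply H; lra).
  rewrite HDB by auto. unfold D, plus, scal; simpl; unfold mult; simpl.
  replace (x + 1 - 1) with x by ring. ring.
Qed.

Lemma G1 : is_RInt_gen (fun t => Rpower t (1 - 1) * exp (- t)) FA FB 1.
Proof.
  set (E := fun t => - exp (- t)).
  assert (HE : forall t, is_derive E t (exp (- t))).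
  { intros t; unfold E; auto_derive; auto; ring. }
  assert (HDE : forall t, Derive E t = exp (- t)).
  { intros t; apply is_derive_unique; auto. }
  assert (H : is_RInt_gen (Derive E) FA FB (0 - -1)).
  { apply is_RInt_gen_Derive.
    - apply prod_pos. intros t _; eexists; apply HE.
    - apply prod_pos. intros t _.
      apply (continuous_ext (fun t => exp (- t))). intros; symmetry; auto.
      apply (@ex_derive_continuous R_AbsRing R_NormedModule). auto_derive; auto.
    - eapply filterlim_filter_le_1. apply filter_le_within.
      replace (-1) with (E 0) by (unfold E; rewrite Ropp_0, exp_0; ring).
      apply (@ex_derive_continuous R_AbsRing R_NormedModule). eexists; apply HE.
    - eapply filterlim_ext; [| apply (liminf 0)].
      intros t; unfold E, Rpower. rewrite Rmult_0_l, exp_0; ring. }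
  replace (0 - -1) with 1 in H by ring.
  eapply is_RInt_gen_ext; [| exact H].
  apply filter_forall. intros _ t _. rewrite HDE. unfold Rpower.
  replace ((1 - 1) * ln t) with 0 by ring. rewrite exp_0, Rmult_1_l. reflexivity.
Qed.

Lemma int_bound (f g G : R -> R) u v : 0 < u -> u <= v ->
  (forall t, 0 < t -> continuous f t) -> (forall t, u <= t <= v -> 0 <= f t <= g t) ->
  (forall t, u <= t <= v -> is_derive G t (g t)) -> (forall t, u <= t <= v -> continuous g t) ->
  0 <= RInt f u v <= G v - G u.
Proof.
  intros Hu Huv Hf Hfg HG Hg.
  assert (Hmin : Rmin u v = u) by (apply Rmin_left; lra).
  assert (Hmax : Rmax u v = v) by (apply Rmax_right; lra).
  assert (Ef : ex_RInt f u v).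
  { apply (@ex_RInt_continuous R_CompleteNormedModule). rewrite Hmin, Hmax. intros z Hz; apply Hf; lra. }
  assert (Ig : is_RInt g u v (minus (G v) (G u))).
  { apply (@is_RInt_derive R_CompleteNormedModule); rewrite Hmin, Hmax; auto. }
  split.
  - apply RInt_ge_0; auto. intros; apply Hfg; lra.
  - replace (G v - G u) with (RInt g u v).
    + apply RInt_le; auto. eexists; eauto. intros; apply Hfg; lra.
    + apply (@is_RInt_unique R_CompleteNormedModule) in Ig. rewrite Ig. reflexivity.
Qed.

Definition fh (t : R) := Rpower t (/ 2 - 1) * exp (- t).
Definition Psi (t : R) := RInt fh 1 t.

Lemma fh_cont t : 0 < t -> continuous fh t.
Proof. apply cont_fx. Qed.

Lemma fh_ex a b : 0 < a -> 0 < b -> ex_RInt fh a b.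
Proof.
  intros Ha Hb. apply (@ex_RInt_continuous R_CompleteNormedModule). intros z Hz. apply fh_cont.
  assert (0 < Rmin a b) by (apply Rmin_case; auto). lra.
Qed.

Lemma Psi_diff u v : 0 < u -> 0 < v -> Psi v - Psi u = RInt fh u v.
Proof.
  intros Hu Hv. unfold Psi.
  rewrite <- (RInt_Chasles fh 1 u v) by (apply fh_ex; lra).
  unfold plus; simpl. ring.
Qed.

Lemma fh_pos t : 0 < t -> 0 <= fh t.
Proof. intros; unfold fh. assert (H1 := Rpower_pos' t (/2 - 1)). assert (H2 := exp_pos (- t)). nra. Qed.

Lemma cauchy_aux (P : R -> Prop) (eps : R) : (forall t, P t -> 0 < t) ->
  (forall u v, P u -> P v -> u <= v -> RInt fh u v < eps) ->
  forall u v, P u -> P v -> ball (Psi u) eps (Psi v).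
Proof.
  intros Hpos H u v Pu Pv. change (Rabs (Psi v - Psi u) < eps).
  assert (Hu := Hpos _ Pu). assert (Hv := Hpos _ Pv).
  destruct (Rle_dec u v) as [Huv|Huv].
  - rewrite Psi_diff by auto. rewrite Rabs_right. apply H; auto.
    apply Rle_ge, RInt_ge_0; auto. apply fh_ex; auto. intros; apply fh_pos; lra.
  - rewrite Rabs_minus_sym, Psi_diff by auto. rewrite Rabs_right. apply H; auto; lra.
    apply Rle_ge, RInt_ge_0; try lra. apply fh_ex; auto. intros; apply fh_pos; lra.
Qed.

Lemma derG t : 0 < t -> is_derive (fun t => 2 * Rpower t (/ 2)) t (Rpower t (/ 2 - 1)).
Proof.
  intros Ht. assert (H := is_derive_scal _ _ 2 _ (exd_pw (/ 2) t Ht)).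
  replace (Rpower t (/ 2 - 1)) with (scal 2 (/ 2 * Rpower t (/ 2 - 1)))
    by (unfold scal; simpl; unfold mult; simpl; field).
  exact H.
Qed.

Lemma exp_neg_le1 t : 0 <= t -> exp (- t) <= 1.
Proof. intros; rewrite <- exp_0. destruct (Req_dec t 0). subst; rewrite Ropp_0; lra.
  left; apply exp_increasing; lra. Qed.

Lemma Psi_lim0 : exists la, filterlim Psi (at_right 0) (locally la).
Proof.
  apply (filterlim_locally_cauchy (F := at_right 0)). intros eps.
  set (d := (eps / 2) ^ 2).
  assert (He : 0 < eps) by (destruct eps; auto).
  assert (Hd : 0 < d) by (unfold d; nra).
  exists (fun t => 0 < t < d). split.
  - exists (mkposreal d Hd). intros y Hy Hy0. change (Rabs (y - 0) < d) in Hy.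
    rewrite Rminus_0_r in Hy. apply Rabs_def2 in Hy. lra.
  - apply cauchy_aux. intros t Ht; apply Ht.
    intros u v [Hu Hud] [Hv Hvd] Huv.
    assert (Hb := int_bound fh (fun t => Rpower t (/ 2 - 1)) (fun t => 2 * Rpower t (/ 2)) u v
                   Hu Huv fh_cont).
    destruct Hb as [_ Hb].
    + intros t Ht. split. apply fh_pos; lra. unfold fh.
      assert (H1 := Rpower_pos' t (/2 - 1)). assert (H3 := exp_neg_le1 t).
      nra.
    + intros t Ht; apply derG; lra.
    + intros t Ht; apply cont_pw; lra.
    + assert (H1 := Rpower_pos' u (/2)). rewrite Rpower_sqrt in Hb by lra.
      assert (H2 : sqrt v < sqrt d) by (apply sqrt_lt_1; lra).
      assert (H3 : sqrt d = eps / 2).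
      { unfold d. rewrite sqrt_pow2; lra. }
      lra.
Qed.

Lemma Psi_liminf : exists lb, filterlim Psi (Rbar_locally p_infty) (locally lb).
Proof.
  apply (filterlim_locally_cauchy (F := Rbar_locally p_infty)). intros eps.
  assert (He : 0 < eps) by (destruct eps; auto).
  set (M := Rmax 1 (- ln eps)).
  exists (fun t => M < t). split.
  - exists M; auto.
  - assert (HM1 : 1 <= M) by apply Rmax_l. assert (HM2 : - ln eps <= M) by apply Rmax_r.
    apply cauchy_aux. intros; lra.
    intros u v Hu Hv Huv.
    assert (Hb := int_bound fh (fun t => exp (- t)) (fun t => - exp (- t)) u v
                   ltac:(lra) Huv fh_cont).
    destruct Hb as [_ Hb].
    + intros t Ht. split. apply fh_pos; lra. unfold fh.
      assert (H1 : Rpower t (/ 2 - 1) <= Rpower t 0) by (apply Rle_Rpower; lra).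
      rewrite Rpower_O in H1 by lra.
      assert (H2 := exp_pos (- t)). nra.
    + intros t Ht; auto_derive; auto; ring.
    + intros t Ht. apply (@ex_derive_continuous R_AbsRing R_NormedModule). auto_derive; auto.
    + assert (H1 := exp_pos (- v)).
      assert (H2 : exp (- u) < exp (ln eps)) by (apply exp_increasing; lra).
      rewrite exp_ln in H2 by lra. lra.
Qed.

Lemma Psi_der t : 0 < t -> is_derive Psi t (fh t).
Proof.
  intros Ht. apply (is_derive_RInt fh Psi 1 t).
  - eapply filter_imp; [| apply loc_pos; exact Ht]. intros y Hy.
    apply (@RInt_correct R_CompleteNormedModule). apply fh_ex; lra.
  - apply fh_cont; auto.
Qed.

Lemma Ghalf_ex : ex_RInt_gen (fun t => Rpower t (/ 2 - 1) * exp (- t)) (at_right 0) (Rbar_locally p_infty).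
Proof.
  destruct Psi_lim0 as [la Hla]. destruct Psi_liminf as [lb Hlb].
  exists (lb - la).
  assert (HD : forall t, 0 < t -> Derive Psi t = fh t).
  { intros; apply is_derive_unique, Psi_der; auto. }
  assert (H : is_RInt_gen (Derive Psi) (at_right 0) (Rbar_locally p_infty) (lb - la)).
  { apply is_RInt_gen_Derive; auto.
    - apply prod_pos. intros t Ht. eexists; apply Psi_der; auto.
    - apply prod_pos. intros t Ht. apply (continuous_ext_loc _ fh).
      + eapply filter_imp; [| apply loc_pos; exact Ht]. intros y Hy. symmetry; apply HD; auto.
      + apply fh_cont; auto. }
  eapply is_RInt_gen_ext; [| exact H].
  eapply filter_imp; [| apply (prod_pos (fun t => 0 < t)); auto].
  intros [a b] Hab t Ht. simpl in *. apply HD. apply Hab; lra.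
Qed.

Fixpoint Pp (k : nat) : R := match k with O => 1 | S k => Pp k * (INR k + / 2) end.

Lemma Gint_is k : is_RInt_gen (fun t => Rpower t (INR k + 1 - 1) * exp (- t)) FA FB (INR (fact k)).
Proof.
  induction k.
  - simpl. replace (0 + 1) with 1 by ring. exact G1.
  - replace (INR (S k) + 1 - 1) with (INR k + 1 + 1 - 1) by (rewrite S_INR; ring).
    replace (INR (fact (S k))) with ((INR k + 1) * INR (fact k))
      by (rewrite fact_simpl, mult_INR, S_INR; ring).
    apply Grec; auto. pose proof (pos_INR k); lra.
Qed.

Lemma Ghalf_is k : is_RInt_gen (fun t => Rpower t (INR k + / 2 - 1) * exp (- t)) FA FB (Gamma (/ 2) * Pp k).
Proof.
  induction k.
  - simpl. replace (0 + / 2) with (/ 2) by ring. rewrite Rmult_1_r.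
    unfold Gamma. apply (RInt_gen_correct (V := R_CompleteNormedModule)).
    apply Ghalf_ex.
  - replace (INR (S k) + / 2 - 1) with (INR k + / 2 + 1 - 1) by (rewrite S_INR; ring).
    replace (Gamma (/ 2) * Pp (S k)) with ((INR k + / 2) * (Gamma (/ 2) * Pp k)) by (simpl; ring).
    apply Grec; auto. pose proof (pos_INR k); lra.
Qed.

Lemma Gint k : Gamma (INR k + 1) = INR (fact k).
Proof. unfold Gamma. apply (is_RInt_gen_unique (V := R_CompleteNormedModule)). apply Gint_is. Qed.

Lemma Ghalf k : Gamma (INR k + / 2) = Gamma (/ 2) * Pp k.
Proof. unfold Gamma. apply (is_RInt_gen_unique (V := R_CompleteNormedModule)). apply Ghalf_is. Qed.

Definition gg (k : nat) : R := Pp k / INR (fact k).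

Lemma fact_pos' k : 0 < INR (fact k).
Proof. apply lt_0_INR, lt_O_fact. Qed.

Lemma gg_S k : gg (S k) = gg k * (INR k + / 2) / (INR k + 1).
Proof.
  unfold gg. simpl Pp. rewrite fact_simpl, mult_INR, S_INR.
  assert (H := fact_pos' k). assert (H2 := pos_INR k). field. lra.
Qed.

Lemma gg_pos k : 0 < gg k.
Proof.
  induction k. unfold gg; simpl; lra.
  rewrite gg_S. assert (H2 := pos_INR k).
  apply Rmult_lt_0_compat. apply Rmult_lt_0_compat; lra. apply Rinv_0_lt_compat; lra.
Qed.

Lemma gg_up k : gg k ^ 2 * (INR k + 1) <= 1.
Proof.
  induction k. unfold gg; simpl; lra.
  rewrite gg_S, S_INR. set (y := INR k). set (g := gg k).
  assert (Hy : 0 <= y) by apply pos_INR.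
  assert (E : (g * (y + / 2) / (y + 1)) ^ 2 * (y + 1 + 1)
              = g ^ 2 * (y + 1) - g ^ 2 * (3 / 4 * y + / 2) / (y + 1) ^ 2) by (field; lra).
  rewrite E. fold g y in IHk.
  assert (0 <= g ^ 2 * (3 / 4 * y + / 2) / (y + 1) ^ 2).
  { apply Rmult_le_pos. apply Rmult_le_pos. nra. lra. left; apply Rinv_0_lt_compat; nra. }
  lra.
Qed.

Lemma gg_low k : 4 * gg (S k) ^ 2 * INR (S k) >= 1.
Proof.
  induction k. rewrite gg_S. unfold gg; simpl. lra.
  rewrite gg_S, (S_INR (S k)). set (y := INR (S k)). set (g := gg (S k)).
  fold g y in IHk.
  assert (Hy : 0 <= y) by apply pos_INR.
  assert (E : 4 * (g * (y + / 2) / (y + 1)) ^ 2 * (y + 1)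
              = 4 * g ^ 2 * y + g ^ 2 / (y + 1)) by (field; lra).
  rewrite E.
  assert (0 <= g ^ 2 / (y + 1)).
  { apply Rmult_le_pos. nra. left; apply Rinv_0_lt_compat; nra. }
  lra.
Qed.

Lemma gg_low0 k : 4 * gg k ^ 2 * (INR k + 1) >= 1.
Proof.
  destruct k. unfold gg; simpl; lra.
  assert (H := gg_low k). assert (H1 := gg_pos (S k)). nra.
Qed.

Lemma gg_low2 j : 8 * gg j ^ 2 * (INR j + / 2) ^ 2 >= INR j + 1.
Proof.
  destruct j. unfold gg; simpl; lra.
  assert (H := gg_low j). assert (H1 := gg_pos (S j)).
  set (y := INR (S j)) in *. set (g := gg (S j)) in *.
  assert (Hy : 1 <= y) by (unfold y; rewrite S_INR; pose proof (pos_INR j); lra).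
  (* 8 g^2 (y+1/2)^2 >= 2 (y+1/2)^2 / y >= y+1 *)
  assert (H2 : 8 * g ^ 2 * (y + / 2) ^ 2 * y >= 2 * (y + / 2) ^ 2) by nra.
  nra.
Qed.

Lemma Rinv_abs_nonneg x : 0 <= / Rabs x.
Proof.
  destruct (Req_dec (Rabs x) 0) as [H|H]. rewrite H, Rinv_0; lra.
  left; apply Rinv_0_lt_compat. pose proof (Rabs_pos x); lra.
Qed.

Lemma Lam_int k : Lambda (INR k) = Gamma (/ 2) * gg k.
Proof. unfold Lambda, gg. rewrite Ghalf, Gint. unfold Rdiv; ring. Qed.

Lemma Lam_half j : Lambda (INR j + / 2) = INR (fact j) / (Gamma (/ 2) * (Pp j * (INR j + / 2))).
Proof.
  unfold Lambda.
  replace (INR j + / 2 + / 2) with (INR j + 1) by field.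
  replace (INR j + / 2 + 1) with (INR (S j) + / 2) by (rewrite S_INR; field).
  rewrite Ghalf, Gint. reflexivity.
Qed.

Theorem mainTheorem5 :
  exists C : R, 0 < C /\
    forall n l : nat, (l <= n)%nat -> Rabs (Lcoef n l) <= C * sqrt (INR n + 1).
Proof.
  set (G0 := Gamma (/ 2)).
  set (K := sqrt PI / Rabs G0).
  assert (HK : 0 <= K).
  { unfold K, Rdiv. apply Rmult_le_pos. apply sqrt_pos. apply Rinv_abs_nonneg. }
  exists (2 + K). split. lra.
  intros n l Hln.
  assert (Hs1 : 1 <= sqrt (INR n + 1)).
  { apply Rle_trans with (sqrt 1). rewrite sqrt_1; lra. apply sqrt_le_1_alt. pose proof (pos_INR n); lra. }
  assert (Hgen : forall X, X ^ 2 <= INR n + 1 -> Rabs X <= (2 + K) * sqrt (INR n + 1)).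
  { intros X HX. assert (Rabs X <= sqrt (INR n + 1)).
    { rewrite <- sqrt_Rsqr_abs. apply sqrt_le_1_alt. unfold Rsqr. nra. }
    nra. }
  unfold Lcoef.
  destruct (Nat.eqb n 0 && Nat.eqb l 0)%bool eqn:E1.
  { apply Hgen. pose proof (pos_INR n). lra. }
  destruct (Nat.eqb n l) eqn:E2.
  { apply Nat.eqb_eq in E2. subst l.
    assert (Hn0 : n <> 0%nat).
    { intros ->. simpl in E1. discriminate. }
    rewrite Lam_int. fold G0.
    destruct (Req_dec G0 0) as [HG|HG].
    { rewrite HG. replace (2 * (0 * gg n)) with 0 by ring. unfold Rdiv. rewrite Rinv_0, Rmult_0_r, Rabs_R0.
      nra. }
    set (g := gg n). assert (Hg := gg_pos n). fold g in Hg.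
    assert (Hl := gg_low0 n). fold g in Hl.
    set (s := sqrt (INR n + 1)) in *.
    assert (Hss : s * s = INR n + 1) by (apply sqrt_sqrt; pose proof (pos_INR n); lra).
    assert (H2a : (2 * g * s) * (2 * g * s) >= 1) by (replace ((2 * g * s) * (2 * g * s)) with (4 * g ^ 2 * (s * s)) by ring; rewrite Hss; lra).
    assert (H2b : 0 < 2 * g * s) by (apply Rmult_lt_0_compat; lra).
    assert (H2 : 1 <= 2 * g * s) by nra.
    assert (HA : 0 < Rabs G0) by (apply Rabs_pos_lt; auto).
    assert (E : Rabs (sqrt PI / (2 * (G0 * g))) = K * / (2 * g)).
    { unfold K. rewrite Rabs_div, Rabs_mult, Rabs_mult, (Rabs_right (sqrt PI)), (Rabs_right 2), (Rabs_right g).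
      field. split; lra. lra. lra. apply Rle_ge, sqrt_pos.
      apply Rmult_integral_contrapositive; split; [lra | apply Rmult_integral_contrapositive; split; lra]. }
    rewrite E.
    assert (H3 : / (2 * g) <= s).
    { apply (Rmult_le_reg_l (2 * g)). lra. rewrite Rinv_r by lra. lra. }
    assert (0 <= / (2 * g)) by (left; apply Rinv_0_lt_compat; lra).
    nra. }
  destruct (Nat.ltb l n && Nat.even (n + l))%bool eqn:E3.
  2: { rewrite Rabs_R0. nra. }
  apply andb_prop in E3. destruct E3 as [E3 E4].
  apply Nat.ltb_lt in E3. apply Nat.even_spec in E4. destruct E4 as [q Hq].
  set (a := (q - l - 1)%nat).
  assert (Hn : n = (l + 2 * a + 2)%nat) by (unfold a; lia).
  clearbody a. subst n.
  set (Nn := INR (l + 2 * a + 2)) in *.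
  set (L := INR l). set (A := INR a).
  assert (HN : Nn = L + 2 * A + 2) by (unfold Nn, L, A; rewrite !plus_INR, mult_INR; simpl; ring).
  assert (HL : 0 <= L) by apply pos_INR. assert (HA0 : 0 <= A) by apply pos_INR.
  replace ((Nn - L - 2) / 2) with (INR a) by (fold A; rewrite HN; field).
  replace ((Nn + L - 1) / 2) with (INR (l + a) + / 2) by (rewrite plus_INR; fold L A; rewrite HN; field).
  rewrite Lam_int, Lam_half. fold G0.
  apply Hgen.
  set (J := INR (l + a)).
  assert (HJ : J = L + A) by (unfold J; rewrite plus_INR; reflexivity).
  destruct (Req_dec G0 0) as [HG|HG].
  { rewrite HG. replace (0 * (Pp (l + a) * (J + / 2))) with 0 by ring. unfold Rdiv at 2. rewrite Rinv_0.
    pose proof (pos_INR (l + 2 * a + 2)). fold Nn in H. nra. }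
  set (ga := gg a). set (gj := gg (l + a)).
  assert (Hga := gg_pos a). assert (Hgj := gg_pos (l + a)). fold ga in Hga. fold gj in Hgj.
  assert (Hup := gg_up a). fold ga A in Hup.
  assert (Hlow := gg_low2 (l + a)). fold gj J in Hlow.
  assert (Hf := fact_pos' (l + a)).
  assert (HPp : Pp (l + a) = gj * INR (fact (l + a))) by (unfold gj, gg; field; lra).
  set (p := Nn * (L + / 2) / ((Nn + L + 1) * (Nn - L))).
  assert (Hden : 0 < (Nn + L + 1) * (Nn - L)) by (rewrite HN; nra).
  assert (Hp0 : 0 <= p).
  { unfold p. apply Rmult_le_pos. rewrite HN; nra. left; apply Rinv_0_lt_compat; auto. }
  assert (Hpd : p * ((Nn + L + 1) * (Nn - L)) = Nn * (L + / 2)) by (unfold p; field; lra).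
  assert (Hp : p <= Nn / 4).
  { assert (Hd4 : (Nn + L + 1) * (Nn - L) >= 4 * (L + / 2)) by (rewrite HN; nra).
    assert (HNn : 0 <= Nn) by (rewrite HN; lra).
    nra. }
  assert (EX : - Nn * (L + / 2) / ((Nn + L + 1) * (Nn - L)) * (G0 * ga) *
               (INR (fact (l + a)) / (G0 * (Pp (l + a) * (J + / 2))))
             = - (p * ga / (gj * (J + / 2)))).
  { rewrite HPp. unfold p. field. repeat split; try lra. }
  rewrite EX.
  set (D := gj * (J + / 2)).
  assert (HD : 0 < D) by (unfold D; apply Rmult_lt_0_compat; lra).
  assert (HD2 : 8 * (D * D) >= J + 1) by (unfold D; nra).
  assert (Hga1 : ga * ga <= 1) by nra.
  replace ((- (p * ga / D)) ^ 2) with ((p * p) * (ga * ga) / (D * D)) by (field; lra).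
  apply (Rmult_le_reg_r (D * D)). nra.
  replace ((p * p) * (ga * ga) / (D * D) * (D * D)) with ((p * p) * (ga * ga)) by (field; lra).
  assert (H1 : (p * p) * (ga * ga) <= Nn * Nn / 16) by nra.
  assert (H2 : Nn * Nn <= 2 * (Nn + 1) * (J + 1)) by (rewrite HN, HJ; nra).
  nra.
Qed.
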